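(* Let $X(t)$ satisfy (A1)–(A2), let $\mathbf v:\mathcal S_n\to\mathbb R^d$, and let $F^{\mathbf v}_k(t,\mathbf x)=\mathbb P\{X(t)=k,\ \mathbf L^{\mathbf v}(t)\le\mathbf x\}$. Then for every $k\in\mathcal S_n$ and every $\mathbf x\in\mathbb R^d\setminus\partial\mathbb R_+^d$, \[ \lim_{t\to0^+}F^{\mathbf v}_k(t,\mathbf x)=\mathbb 1_{\mathbb R_+^d}(\mathbf x)\,\mathbb P\{X(0)=k\}=F^{\mathbf v}_k(0,\mathbf x). \]
   Context: $\mathbb R_+^d=[0,\infty)^d$ and $\partial\mathbb R_+^d$ is its topological boundary in $\mathbb R^d$. (A1): $\{X(t)\}_{t\ge0}$ is a regular jump Markov process on $(\Omega,\mathcal F,\mathbb P)$ with values in $\mathcal S_n=\{1,\dots,n\}$, right-continuous trajectories, transition rates $q_{ij}(t)$. (A2): $Q(t)=(q_{ij}(t))$ is conservative ($q_i(t):=-q_{ii}(t)=\sum_{j\ne i}q_{ij}(t)$), continuous and bounded on $[0,\infty)$, and for each $i$ either $q_i\equiv0$ or $q_i>0$ everywhere with $\int_0^\infty q_i=\infty$. $\mathbf L^{\mathbf v}(t)=\int_0^t\mathbf v(X(s))\,ds$; comparisons componentwise. *)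

(* Defs.v *)
From HB Require Import structures.
From mathcomp Require Import all_boot all_order all_algebra.
From mathcomp Require Import all_classical all_reals all_analysis.
Set Implicit Arguments. Unset Strict Implicit. Unset Printing Implicit Defensive.
Import Order.TTheory GRing.Theory Num.Theory.
Import numFieldNormedType.Exports.
Local Open Scope classical_set_scope.
Local Open Scope ring_scope.

(* The state space S_n = {1,...,n} is represented by 'I_n = {0,...,n-1}.
   The process X is indexed by real time t; only t >= 0 is relevant. *)

Section Defs.
Context {R : realType} {d0 : measure_display} {Omega : measurableType d0}.
Context (P : probability Omega R) (n : nat).

Definition state_event (X : R -> Omega -> 'I_n) (t : R) (i : 'I_n) : set Omega :=
  [set w | X t w = i].

Definition adapted_process (X : R -> Omega -> 'I_n) : Prop :=
  forall t i, 0 <= t -> measurable (state_event X t i).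

(* right-continuous trajectories (discrete state space) *)
Definition right_continuous_paths (X : R -> Omega -> 'I_n) : Prop :=
  forall w t, 0 <= t -> exists2 e : R, 0 < e &
    forall s, t <= s -> s < t + e -> X s w = X t w.

(* regular (non-explosive) jump process: on every bounded time interval each
   trajectory has finitely many jump times *)
Definition finitely_many_jumps (X : R -> Omega -> 'I_n) : Prop :=
  forall w T, 0 <= T -> exists s : seq R,
    forall t1 t2, 0 <= t1 -> t1 <= t2 -> t2 <= T ->
      (forall u, u \in s -> ~ (t1 < u <= t2)) -> X t1 w = X t2 w.

Definition transition_function (p : R -> R -> 'I_n -> 'I_n -> R) : Prop :=
  [/\ (forall s t i j, 0 <= s -> s <= t -> 0 <= p s t i j),
      (forall s t i, 0 <= s -> s <= t -> \sum_(j < n) p s t i j = 1),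
      (forall s i j, 0 <= s -> p s s i j = (i == j)%:R) &
      (forall s u t i j, 0 <= s -> s <= u -> u <= t ->
         p s t i j = \sum_(l < n) p s u i l * p u t l j)].

Definition markov_with (X : R -> Omega -> 'I_n)
    (p : R -> R -> 'I_n -> 'I_n -> R) : Prop :=
  forall (m : nat) (ts : 'I_m.+1 -> R) (st : 'I_m.+1 -> 'I_n) (t : R) (j : 'I_n),
    0 <= ts ord0 ->
    (forall a b : 'I_m.+1, (a < b)%N -> ts a < ts b) ->
    ts ord_max < t ->
    (P (\bigcap_(a in [set: 'I_m.+1]) state_event X (ts a) (st a) `&` state_event X t j)
    = P (\bigcap_(a in [set: 'I_m.+1]) state_event X (ts a) (st a))
      * (p (ts ord_max) t (st ord_max) j)%:E)%E.

Definition has_rates (p : R -> R -> 'I_n -> 'I_n -> R)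
    (q : R -> 'I_n -> 'I_n -> R) : Prop :=
  forall t i j, 0 <= t ->
    (fun h => (p t (t + h) i j - (i == j)%:R) / h) @ 0^'+ --> q t i j.

Definition A1 (X : R -> Omega -> 'I_n) (q : R -> 'I_n -> 'I_n -> R) : Prop :=
  [/\ adapted_process X, right_continuous_paths X, finitely_many_jumps X &
      exists p, [/\ transition_function p, markov_with X p & has_rates p q]].

Definition qi (q : R -> 'I_n -> 'I_n -> R) (i : 'I_n) (t : R) : R := - q t i i.

Definition A2 (q : R -> 'I_n -> 'I_n -> R) : Prop :=
  [/\ (forall t i, 0 <= t -> qi q i t = \sum_(j < n | j != i) q t i j),
      (forall i j, {within `[0, +oo[, continuous (fun t => q t i j)}),
      (exists M : R, forall t i j, 0 <= t -> `|q t i j| <= M) &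
      (forall i, (forall t, 0 <= t -> qi q i t = 0) \/
                 ((forall t, 0 <= t -> 0 < qi q i t) /\
                  (\int[lebesgue_measure]_(t in `[0%R, +oo[) (qi q i t)%:E = +oo)%E))].

End Defs.

Definition Lv {R : realType} {Omega : Type} {n d : nat}
    (v : 'I_n -> 'I_d -> R) (X : R -> Omega -> 'I_n) (t : R) (w : Omega) : 'I_d -> R :=
  fun i => Rintegral lebesgue_measure `[0, t] (fun s => v (X s w) i).

Definition Fv {R : realType} {d0 : measure_display} {Omega : measurableType d0}
    (P : probability Omega R) {n d : nat}
    (v : 'I_n -> 'I_d -> R) (X : R -> Omega -> 'I_n) (k : 'I_n) (t : R) (x : 'I_d -> R) : R :=
  fine (P [set w | X t w = k /\ forall i, Lv v X t w i <= x i]).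

Definition Rplus {R : realType} (d : nat) : set ('I_d -> R) :=
  [set x | forall i, 0 <= x i].

Definition indic_Rplus {R : realType} {d : nat} (x : 'I_d -> R) : R :=
  \1_(@Rplus R d) x.

(* topological boundary of R_+^d in R^d; R^d = 'I_d -> R carries the product
   topology (= Euclidean topology, d being finite) *)
Definition boundary_Rplus {R : realType} (d : nat) : set ('I_d -> R) :=
  let A : set {ptws 'I_d -> R} := @Rplus R d in
  closure A `\` interior A.

(* Main.v *)
Require Import Defs.
From HB Require Import structures.
From mathcomp Require Import all_boot all_order all_algebra.
From mathcomp Require Import all_classical all_reals all_analysis.
From mathcomp Require Import measurable_realfun.
Import Order.TTheory GRing.Theory Num.Theory.
Import numFieldNormedType.Exports.
Local Open Scope classical_set_scope.
Local Open Scope ring_scope.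
Section Riemann.
Context (R : realType).

Definition hh (t : R) (m : nat) : R := t / m.+1%:R.
Definition II (t : R) (m l : nat) : set R := `]l%:R * hh t m, l.+1%:R * hh t m].
Definition gg (c : R -> R) (t : R) (m : nat) (s : R) : R :=
  \sum_(l < m.+1) c (l.+1%:R * hh t m) * \1_(II t m l) s.

Lemma hh_gt0 t m : 0 < t -> 0 < hh t m.
Proof. by move=> t0; rewrite /hh divr_gt0 // ltr0n. Qed.

Lemma hh_mul t m : m.+1%:R * hh t m = t.
Proof. by rewrite /hh mulrC divfK // pnatr_eq0. Qed.

Lemma hh_le t m a b : 0 < t -> (a <= b)%N -> a%:R * hh t m <= b%:R * hh t m.
Proof. by move=> t0 ab; rewrite ler_wpM2r ?ler_nat // ltW // hh_gt0. Qed.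

Lemma gg_val c t m s : 0 < t -> 0 < s -> s <= t ->
  exists l : 'I_m.+1, gg c t m s = c (l.+1%:R * hh t m) /\
     s <= l.+1%:R * hh t m < s + hh t m.
Proof.
move=> t0 s0 st.
have ex : exists l : nat, (s <= l.+1%:R * hh t m) by exists m; rewrite hh_mul.
case: (ex_minnP ex) => l0 Pl0 minl0.
have l0m : (l0 < m.+1)%N by rewrite ltnS; apply: minl0; rewrite hh_mul.
have low : l0%:R * hh t m < s.
  case: l0 Pl0 minl0 l0m => [|k] Pk mink _; first by rewrite mul0r.
  rewrite ltNge; apply/negP => Hk; have := mink _ Hk; by rewrite ltnn.
exists (Ordinal l0m) => /=; split; last first.
  by rewrite Pl0 /= -natr1 mulrDl mul1r ltrD2r.
rewrite /gg (bigD1 (Ordinal l0m)) //= big1 ?addr0.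
  by rewrite indicE mem_set ?mulr1 //= /II /= in_itv /= low Pl0.
move=> j /eqP jl; rewrite indicE memNset ?mulr0 //=; rewrite /II /= in_itv /= => /andP[h1 h2].
have [jl0|jl0|jl0] := ltngtP j l0.
- by have := minl0 _ h2; rewrite leqNgt jl0.
- have := @hh_le t m l0.+1 j t0 jl0; rewrite leNgt => /negP; apply; exact: lt_le_trans h1 Pl0.
- by apply: jl; apply: val_inj; rewrite /= jl0.
Qed.

Lemma bnd_cst (T : Type) (A : set T) (f : T -> R) (M : R) :
  (forall x, A x -> `|f x| <= M) -> [bounded f x | x in A].
Proof.
move=> H; exists M; split; first exact: num_real.
move=> N MN x Ax /=; apply: le_trans (H x Ax) (ltW MN).
Qed.

Lemma hh_small t e : 0 < t -> 0 < e -> \forall m \near \oo, hh t m <= e.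
Proof.
move=> t0 e0; exists (Num.truncn (t / e)) => // m /= Nm.
rewrite /hh ler_pdivrMr ?ltr0n //.
have : t / e < m.+1%:R by rewrite -Num.Theory.truncn_le_nat.
by rewrite ltr_pdivrMr // => /ltW; rewrite mulrC.
Qed.

Lemma riemann (c : R -> R) (t M : R) :
  0 < t -> (forall s, `|c s| <= M) ->
  (forall s, 0 <= s -> exists2 e : R, 0 < e &
       forall u, s <= u -> u < s + e -> c u = c s) ->
  (fun m : nat => \sum_(l < m.+1) c (l.+1%:R * hh t m) * hh t m) @ \oo
     --> Rintegral lebesgue_measure `[0, t] c.
Proof.
move=> t0 cM crc.
pose D : set R := [set` `]0, t]].
have mD : measurable D by exact: measurable_itv.
have muD : (lebesgue_measure D < +oo)%E.
  by rewrite lebesgue_measure_itv /= lte_fin t0 -EFinB ltry.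
have mII m l : measurable (II t m l) by exact: measurable_itv.
have mg m : measurable_fun D (gg c t m).
  apply: measurable_sum => l; apply: measurable_funM.
    exact: measurable_cst.
  exact: measurable_indic.
have gcv s : D s -> gg c t m s @[m --> \oo] --> c s.
  rewrite /D /= in_itv /= => /andP[s0 st].
  have [e e0 He] := crc s (ltW s0).
  have e1 : \forall m \near \oo, (fun=> c s) m = gg c t m s.
    near=> m; have [l [-> /andP[h1 h2]]] := gg_val c t m s t0 s0 st.
  apply/esym/He => //; apply: lt_le_trans h2 _; rewrite lerD2l.
  by near: m; exact: hh_small.
  exact: (cvg_trans (near_eq_cvg e1) (cvg_cst (c s))).
have cmeas : measurable_fun D c := measurable_fun_cvg mg gcv.
have gb m s : D s -> `|gg c t m s| <= M.
  rewrite /D /= in_itv /= => /andP[s0 st].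
  by have [l [-> _]] := gg_val c t m s t0 s0 st.
have h1 m : measurable_fun D (EFin \o gg c t m) by apply/measurable_EFinP.
have h2 : measurable_fun D (EFin \o c) by apply/measurable_EFinP.
have h3 : {ae lebesgue_measure, forall x, D x ->
    (fun m => (EFin \o gg c t m) x) @ \oo --> (EFin \o c) x}.
  apply: aeW => x Dx; apply/fine_cvgP; split; first exact: nearW.
  exact: gcv.
have h4 : lebesgue_measure.-integrable D (EFin \o (fun _ : R => `|M|)).
  apply: measurable_bounded_integrable; [exact: mD|exact: muD|exact: measurable_cst|].
  by apply: (bnd_cst _ _ _ `|M|) => x _; rewrite normr_id.
have h5 : {ae lebesgue_measure, forall x m, D x ->
    (`|(EFin \o gg c t m) x| <= (EFin \o (fun _ : R => `|M|%R)) x)%E}.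
  apply: aeW => x m Dx; rewrite /= lee_fin; apply: le_trans (gb m x Dx) _.
  exact: ler_norm.
have [ic _ cvI] := @dominated_convergence _ _ _ lebesgue_measure D mD _ _ _ h1 h2 h3 h4 h5.
have Ig m : (\int[lebesgue_measure]_(x in D) (EFin \o gg c t m) x =
    (\sum_(l < m.+1) c (l.+1%:R * hh t m) * hh t m)%:E)%E.
  rewrite /gg /=.
  under eq_integral do rewrite -sumEFin.
  rewrite integral_sum //; last first.
    move=> l; apply: measurable_bounded_integrable; [exact: mD|exact: muD| |].
      apply: measurable_funM; [exact: measurable_cst|apply: measurable_indic; exact: mII].
    apply: (bnd_cst _ _ _ `|c (l.+1%:R * hh t m)|) => x _.
    rewrite normrM indicE; case: (x \in _); rewrite ?normr1 ?normr0 ?mulr1 ?mulr0 //.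
  rewrite -sumEFin; apply: eq_bigr => l _.
  under eq_integral do rewrite EFinM.
  rewrite integralZl //; last first.
    apply: measurable_bounded_integrable; [exact: mD|exact: muD| |].
      apply: measurable_indic; exact: mII.
    apply: (bnd_cst _ _ _ 1) => x _.
    rewrite indicE; case: (x \in _); rewrite ?normr1 ?normr0 //.
  rewrite integral_indic //; last exact: mII.
  rewrite setIidl; last first.
    move=> x; rewrite /II /D /= !in_itv /= => /andP[k1 k2].
    rewrite (le_lt_trans _ k1) //=; last by rewrite mulr_ge0 ?ler0n // ltW // hh_gt0.
    apply: (le_trans k2); rewrite -[X in _ <= X](hh_mul t m).
    by apply: hh_le => //; rewrite ltn_ord.
  have E : lebesgue_measure (II t m l) = (hh t m)%:E.
    rewrite /II lebesgue_measure_itv /= lte_fin ltr_pM2r ?hh_gt0 // ltr_nat ltnSn.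
    by rewrite -EFinB -natr1 mulrDl mul1r addrAC subrr add0r.
  transitivity ((c (l.+1%:R * hh t m))%:E * (hh t m)%:E)%E; last by []. congr (_ * _)%E. exact: E.
rewrite -Rintegral_itv_obnd_cbnd //.
have fin := @integrable_fin_num _ _ _ lebesgue_measure D mD _ ic.
move: cvI; rewrite -(fineK fin).
rewrite (_ : (fun n => _) = (fun m => (\sum_(l < m.+1) c (l.+1%:R * hh t m) * hh t m)%:E)); last first.
  by apply/funext => m; rewrite Ig.
by move/fine_cvg.
Unshelve. all: by end_near. Qed.

Section Main.
Context {d0 : measure_display} {Omega : measurableType d0}.
Context (P : probability Omega R) (n d : nat).
Context (X : R -> Omega -> 'I_n) (v : 'I_n -> 'I_d -> R).
Hypothesis adX : adapted_process X.
Hypothesis rcX : right_continuous_paths X.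

Lemma meas_vX u i : 0 <= u -> measurable_fun setT (fun w => v (X u w) i).
Proof.
move=> u0.
have -> : (fun w => v (X u w) i) =
    (fun w => \sum_(j < n) v j i * \1_(state_event X u j) w).
  apply/funext => w; rewrite (bigD1 (X u w)) //= indicE mem_set // mulr1.
  rewrite big1 ?addr0 // => j jX; rewrite indicE memNset ?mulr0 //= => E.
  by move: jX; rewrite E eqxx.
apply: measurable_sum => j; apply: measurable_funM; first exact: measurable_cst.
by apply: measurable_indic; apply: adX.
Qed.

Lemma vbound (w : Omega) i s : `|v (X s w) i| <= \sum_(j < n) `|v j i|.
Proof.
by rewrite (bigD1 (X s w)) //= lerDl sumr_ge0.
Qed.

Lemma meas_Lv t i : 0 < t -> measurable_fun setT (fun w => Lv v X t w i).
Proof.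
move=> t0.
apply: (measurable_fun_cvg (h := fun m w =>
   \sum_(l < m.+1) v (X (l.+1%:R * hh t m) w) i * hh t m)).
  move=> m; apply: measurable_sum => l; apply: measurable_funM.
    apply: meas_vX; rewrite mulr_ge0 ?ler0n // ltW // hh_gt0 //.
  exact: measurable_cst.
move=> w _; rewrite /Lv.
apply: (riemann (fun s => v (X s w) i) t _ t0 (vbound w i)).
move=> s s0; have [e e0 He] := rcX w s s0; exists e => // u su ue.
by rewrite He.
Qed.

Definition AA k x t := [set w | X t w = k /\ forall i, Lv v X t w i <= x i].

Lemma meas_AA k x t : 0 < t -> measurable (AA k x t).
Proof.
move=> t0.
have -> : AA k x t = state_event X t k `&`
    \bigcap_(i in [set: 'I_d]) ((fun w => Lv v X t w i) @^-1` `]-oo, x i]).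
  apply/seteqP; split => w /=.
    by move=> [Hk H]; split => // i _ /=; rewrite in_itv /= H.
  by move=> [Hk H]; split => // i; have := H i I; rewrite /= in_itv.
apply: measurableI; first by apply: adX; exact: ltW.
apply: fin_bigcap_measurable; first exact: finite_finset.
move=> i _; rewrite -[X in measurable X]setTI.
by apply: meas_Lv => //; exact: measurable_itv.
Qed.


Lemma Lv_const t w i : 0 <= t -> (forall s, 0 <= s -> s <= t -> X s w = X 0 w) ->
  Lv v X t w i = t * v (X 0 w) i.
Proof.
move=> t0 H; rewrite /Lv (@eq_Rintegral _ _ _ _ _ (fun _ => v (X 0 w) i)); last first.
  by move=> s; rewrite inE /= in_itv /= => /andP[s0 st]; rewrite H.
rewrite Rintegral_cst; last exact: measurable_itv.
have E : fine (lebesgue_measure ([set` `[0, t]] : set R)) = t.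
  rewrite lebesgue_measure_itv /= lte_fin; case: ifPn => [_|]; first by rewrite /= subr0.
  by rewrite -leNgt => tl; apply/esym/eqP; rewrite eq_le tl t0.
transitivity (v (X 0 w) i * t); last exact: mulrC.
by congr (_ * _); exact: E.
Qed.

Lemma ev_const w (u : R^nat) : u @ \oo --> 0 ->
  \forall m \near \oo, forall s, 0 <= s -> s <= u m -> X s w = X 0 w.
Proof.
move=> ucv; have [e e0 He] := rcX w 0 (lexx 0).
apply: filterS (cvgr_lt 0 ucv e e0) => m ume s s0 sm.
by apply: He => //; rewrite add0r (le_lt_trans sm ume).
Qed.

Lemma lim_gen k x (B : set Omega) (u : R^nat) : measurable B ->
  (forall m, 0 < u m) -> (forall w, \forall m \near \oo, (AA k x (u m) w <-> B w)) ->
  fine (P (AA k x (u m))) @[m --> \oo] --> fine (P B).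
Proof.
move=> mB u0 HAB.
have mA m := meas_AA k x (u m) (u0 m).
have h1 m : measurable_fun setT (EFin \o \1_(AA k x (u m)) : Omega -> \bar R).
  by apply/measurable_EFinP; exact: measurable_indic.
have h2 : measurable_fun setT (EFin \o \1_B : Omega -> \bar R).
  by apply/measurable_EFinP; exact: measurable_indic.
have h3 : {ae P, forall w, setT w ->
    (fun m => (EFin \o (\1_(AA k x (u m)) : Omega -> R)) w) @ \oo --> (EFin \o (\1_B : Omega -> R)) w}.
  apply: aeW => w _.
  have e1 : \forall m \near \oo, (fun=> (EFin \o (\1_B : Omega -> R)) w) m =
     (EFin \o (\1_(AA k x (u m)) : Omega -> R)) w.
    apply: filterS (HAB w) => m hm /=; rewrite !indicE.
    have -> : (w \in AA k x (u m)) = (w \in B).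
      by apply/idP/idP => /set_mem/hm/mem_set.
    by [].
  exact: (cvg_trans (near_eq_cvg e1) (cvg_cst _)).
have h4 : P.-integrable setT (EFin \o (fun _ : Omega => 1 : R)).
  apply: measurable_bounded_integrable; [exact: measurableT| |exact: measurable_cst|].
    by apply: (le_lt_trans (probability_le1 _ measurableT)); rewrite ltry.
  by apply: (bnd_cst _ _ _ 1) => w _; rewrite normr1.
have h5 : {ae P, forall w m, setT w ->
    (`|(EFin \o (\1_(AA k x (u m)) : Omega -> R)) w| <= (EFin \o (fun _ : Omega => 1%R : R)) w)%E}.
  apply: aeW => w m _; rewrite /= lee_fin indicE.
  by case: (w \in _); rewrite ?normr1 ?normr0.
have [_ _ cvI] := dominated_convergence measurableT h1 h2 h3 h4 h5.
move: cvI; rewrite integral_indic // setIT.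
rewrite (_ : (fun n => _) = (fun m => P (AA k x (u m)))); last first.
  by apply/funext => m /=; rewrite integral_indic // setIT.
move=> cvI; apply: fine_cvg; rewrite fineK //; exact: fin_num_measure.
Qed.

End Main.
End Riemann.

Lemma int_pos (R : realType) (d : nat) (x : 'I_d -> R) :
  interior (@Rplus R d : set {ptws 'I_d -> R}) x -> forall i, 0 < x i.
Proof.
move=> intx i.
have e : dfwith x i (x i) = x.
  by apply: functional_extensionality_dep => j; case: dfwithP.
have H : nbhs (x i) ((@dfwith 'I_d (fun _ => R) x i) @^-1` (@Rplus R d)).
  apply: (@dfwith_continuous 'I_d (fun _ => R) x i (x i)).
  move: intx; congr (nbhs _ _); exact: esym.
have H2 : \forall y \near (x i)^'-, 0 <= y.
  apply: cvg_within; apply: filterS H => y /= /(_ i).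
  by rewrite dfwithin.
have [y [yx y0]] := filter_ex (filterI (nbhs_left_lt (x i)) H2).
exact: le_lt_trans y0 yx.
Qed.

Lemma bd_cases (R : realType) (d : nat) (x : 'I_d -> R) :
  ~ (@boundary_Rplus R d) x -> (forall i, 0 < x i) \/ (exists i, x i < 0).
Proof.
move=> nb.
have [intx|nintx] := pselect (interior (@Rplus R d : set {ptws 'I_d -> R}) x).
  by left; exact: int_pos.
right; have ncl : ~ closure (@Rplus R d : set {ptws 'I_d -> R}) x.
  by move=> cl; apply: nb; split.
have nA : ~ (@Rplus R d) x by move=> Ax; apply: ncl; exact: subset_closure.
have [i ni] : exists i, ~ 0 <= x i by apply/existsNP.
by exists i; rewrite ltNge; apply/negP.
Qed.
Theorem proposition2 (R : realType) (d0 : measure_display) (Omega : measurableType d0)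
    (P : probability Omega R) (n d : nat)
    (X : R -> Omega -> 'I_n) (q : R -> 'I_n -> 'I_n -> R)
    (v : 'I_n -> 'I_d -> R) :
  A1 P X q -> A2 q ->
  forall (k : 'I_n) (x : 'I_d -> R),
    ~ (@boundary_Rplus R d) x ->
    Fv P v X k t x @[t --> 0^'+] --> indic_Rplus x * fine (P [set w | X 0 w = k])
    /\ indic_Rplus x * fine (P [set w | X 0 w = k]) = Fv P v X k 0 x.
Proof.
move=> [adX rcX _ _] _ k x nb.
have L0 w i : Lv v X 0 w i = 0.
  rewrite (Lv_const R n d X v 0 w i (lexx 0)) ?mul0r // => s s0 s00.
  by have -> : s = 0 by apply/le_anti; rewrite s0 s00.
split; last first.
  rewrite /Fv /indic_Rplus indicE.
  have [Rx|nRx] := pselect (Rplus x).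
    rewrite mem_set // mul1r; congr (fine (P _)); apply/seteqP; split => w /=.
      by move=> ->; split => // i; rewrite L0; exact: Rx i.
    by case.
  rewrite memNset // mul0r (_ : [set w | _] = set0) ?measure0 //.
  apply/seteqP; split => w //= [_ H]; apply: nRx => i; rewrite -(L0 w i); exact: H i.
apply/cvg_at_rightP => u [u0 ucv].
have key w : \forall m \near \oo, X (u m) w = X 0 w /\
     forall i, Lv v X (u m) w i = u m * v (X 0 w) i.
  apply: filterS (ev_const R n X rcX w u ucv) => m Hs; split.
    exact: Hs (u m) (ltW (u0 m)) (lexx _).
  by move=> i; apply: Lv_const => //; exact: ltW.
have cva w i : u m * v (X 0 w) i @[m --> \oo] --> 0.
  by rewrite -[X in _ --> X](mul0r (v (X 0 w) i)); exact: cvgMr_tmp.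
case: (bd_cases R d x nb) => [pos|[i0 neg]].
- have -> : indic_Rplus x = 1.
    by rewrite /indic_Rplus indicE mem_set // => i; exact: ltW.
  rewrite mul1r.
  apply: (lim_gen R P n d X v adX rcX k x (state_event X 0 k) u) => //.
    exact: adX.
  move=> w.
  have Ha : \forall m \near \oo, forall i, u m * v (X 0 w) i <= x i.
    apply: filter_forall => i; apply: filterS (cvgr_lt 0 (cva w i) (x i) (pos i)).
    by move=> m /ltW.
  apply: filterS2 (key w) Ha => m [Xu Lu] Ha'.
  rewrite /AA /state_event /=; split => [[Hk _]|Hk]; first by rewrite -Xu.
  by split; [rewrite Xu | move=> i; rewrite Lu].
- have -> : indic_Rplus x = 0.
    rewrite /indic_Rplus indicE memNset // => H.
    by have := H i0; rewrite leNgt neg.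
  rewrite mul0r.
  have := lim_gen R P n d X v adX rcX k x set0 u measurable0 u0.
  rewrite measure0 /=; apply.
  move=> w.
  apply: filterS2 (key w) (cvgr_gt 0 (cva w i0) (x i0) neg) => m [Xu Lu] Ha'.
  split => //= [[_ H]]; have := H i0; rewrite Lu leNgt Ha'.
  by [].
Qed.
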